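(* Let $i\ge1$. Then $\tilde\Delta^{i-1}\circ F_i$ is the identity of $Prim({\cal H}_R)^{\otimes i}$, and $\tilde\Delta^{k}\circ F_i=0$ for every $k>i-1$. Moreover $F_i$ is injective, and the sum $\mathbb{Q}1+\sum_{i=1}^{\infty}Im(F_i)$ is direct.
   Context: A rooted tree is a finite connected and simply connected graph with a distinguished vertex (the root), edges oriented away from the root; its weight is its number of vertices. ${\cal H}_R$ is the commutative polynomial algebra over $\mathbb{Q}$ on the isomorphism classes of rooted trees; monomials are forests ($1$ is the empty forest), the weight of a forest is its total number of vertices. An admissible cut $C$ of a tree $t$ is a nonempty set of edges such that every path from the root to a vertex contains at most one edge of $C$; removing them gives a forest in which $R^C(t)$ is the tree containing the root and $P^C(t)$ the product of the others. ${\cal H}_R$ is a Hopf algebra with coproduct the algebra morphism $\Delta$ with $\Delta(t)=1\otimes t+t\otimes1+\sum_C P^C(t)\otimes R^C(t)$ on trees, unit $\eta$ and counit $\varepsilon$ ($\varepsilon(1)=1$, $\varepsilon(t)=0$ on trees). $\tilde\Delta(x):=\Delta(x)-1\otimes x-x\otimes1$; $Prim({\cal H}_R)=\ker\tilde\Delta$. Set $\tilde\Delta^0=Id-\eta\circ\varepsilon$, $\tilde\Delta^1=\tilde\Delta$, $\tilde\Delta^k=(\tilde\Delta^{k-1}\otimes Id)\circ\tilde\Delta$, a map ${\cal H}_R\to{\cal H}_R^{\otimes(k+1)}$. For forests $M,N$: $M\top N=0$ if $N=1$, and otherwise $M\top N=\frac{1}{weight(N)}\sum_v N_v$, where $v$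 runs over vertices of $N$ and $N_v$ is obtained from $N$ by attaching every tree of $M$ to $v$ (an edge from $v$ to each root of $M$); extended bilinearly. $p_i\top\cdots\top p_1:=(p_i\top\cdots\top p_2)\top p_1$. $F_i:Prim({\cal H}_R)^{\otimes i}\to{\cal H}_R$ is the linear map with $F_i(p_i\otimes\cdots\otimes p_1)=p_i\top\cdots\top p_1$. *)

(* Defs.v *)
(* Connes-Kreimer Hopf algebra of rooted trees H_R over Q,
   modelled by formal finite linear combinations over explicit bases. *)
From HB Require Import structures.
From mathcomp Require Import all_boot all_order all_algebra.
Set Implicit Arguments.
Unset Strict Implicit.
Unset Printing Implicit Defensive.
Import Order.TTheory GRing.Theory Num.Theory.

(* The order of children is irrelevant: isomorphism classes are handled *)
(* through the canonical form [canon] below.                           *)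
Inductive rtree := RNode of seq rtree.

Fixpoint rtree_enc (t : rtree) : GenTree.tree unit :=
  let: RNode ts := t in GenTree.Node 0 (map rtree_enc ts).

Fixpoint rtree_dec (g : GenTree.tree unit) : rtree :=
  match g with
  | GenTree.Leaf _ => RNode [::]
  | GenTree.Node _ gs => RNode (map rtree_dec gs)
  end.

Lemma rtree_encK_aux : forall t, rtree_dec (rtree_enc t) = t.
Proof.
fix IH 1; case=> ts /=; congr RNode; elim: ts => //= t ts IHts.
by rewrite IH IHts.
Qed.

Lemma rtree_encK : cancel rtree_enc rtree_dec.
Proof. exact: rtree_encK_aux. Qed.

HB.instance Definition _ := Countable.copy rtree (can_type rtree_encK).

Definition leaf : rtree := RNode [::].

Fixpoint weight (t : rtree) : nat :=
  let: RNode ts := t in (sumn (map weight ts)).+1.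

Definition tle (a b : rtree) : bool := (pickle a <= pickle b)%N.

Fixpoint canon (t : rtree) : rtree :=
  let: RNode ts := t in RNode (sort tle (map canon ts)).

(* Forests = monomials of H_R (the empty forest is 1). *)
Definition forest := seq rtree.
Definition fcanon (f : forest) : forest := sort tle (map canon f).
Definition fweight (f : forest) : nat := sumn (map weight f).

(* Vertices are addressed by paths from the root ([::] = the root,
   i :: p = vertex p inside the i-th subtree of the root).  An edge is
   identified with its endpoint farthest from the root (a non-root vertex). *)
Fixpoint vertices (t : rtree) : seq (seq nat) :=
  let: RNode ts := t in
  [::] :: (fix aux (i : nat) (us : seq rtree) : seq (seq nat) :=
             match us with
             | [::] => [::]
             | u :: us' => map (cons i) (vertices u) ++ aux i.+1 us'
             end) 0%N ts.

Definition edges (t : rtree) : seq (seq nat) :=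
  [seq v <- vertices t | v != [::]].

Fixpoint subtree (t : rtree) (p : seq nat) : rtree :=
  match p with
  | [::] => t
  | i :: p' => let: RNode ts := t in subtree (nth leaf ts i) p'
  end.

(* the tree containing the root after removing the edges of C *)
Fixpoint prune (t : rtree) (C : seq (seq nat)) : rtree :=
  let: RNode ts := t in
  RNode ((fix aux (i : nat) (us : seq rtree) : seq rtree :=
            match us with
            | [::] => [::]
            | u :: us' =>
                if [:: i] \in C then aux i.+1 us'
                else prune u [seq behead c | c <- C & (c != [::]) && (head 0%N c == i)]
                       :: aux i.+1 us'
            end) 0%N ts).

Fixpoint subseqs (T : Type) (s : seq T) : seq (seq T) :=
  match s with
  | [::] => [:: [::]]
  | x :: s' => let r := subseqs s' in map (cons x) r ++ r
  end.

(* An admissible cut: a nonempty set C of edges such that every path from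
   the root to a vertex v contains at most one edge of C (the edges on that
   path are exactly the non-root prefixes of v). *)
Definition admissible (t : rtree) (C : seq (seq nat)) : bool :=
  [&& C != [::], all (fun c => c \in edges t) C, uniq C &
      all (fun v => (count (fun c => prefix c v) C <= 1)%N) (vertices t)].

Definition adm_cuts (t : rtree) : seq (seq (seq nat)) :=
  [seq C <- subseqs (edges t) | admissible t C].

Definition PC (t : rtree) (C : seq (seq nat)) : forest := [seq subtree t c | c <- C].
Definition RC (t : rtree) (C : seq (seq nat)) : rtree := prune t C.

(* H  = elements of H_R : combinations of forests.                      *)
(* HT = elements of tensor powers H_R^{(x) k}: combinations of k-lists   *)
(*      of forests [:: a_1; ...; a_k] standing for a_1 (x) ... (x) a_k.  *)
Local Open Scope ring_scope.

Definition H := seq (rat * forest).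
Definition HT := seq (rat * seq forest).

Definition coefH (x : H) (b : forest) : rat :=
  \sum_(e <- x | fcanon e.2 == fcanon b) e.1.
Definition coefT (x : HT) (b : seq forest) : rat :=
  \sum_(e <- x | map fcanon e.2 == map fcanon b) e.1.

Definition eqH (x y : H) : Prop := forall b, coefH x b = coefH y b.
Definition eqT (x y : HT) : Prop := forall b, coefT x b = coefT y b.

Definition scaleH (c : rat) (x : H) : H := [seq (c * e.1, e.2) | e <- x].
Definition scaleT (c : rat) (x : HT) : HT := [seq (c * e.1, e.2) | e <- x].

Definition oneH : H := [:: (1, [::])].

Definition mulT (x y : HT) : HT :=
  [seq (e.1 * d.1, [seq p.1 ++ p.2 | p <- zip e.2 d.2]) | e <- x, d <- y].

Definition Delta_tree (t : rtree) : HT :=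
  [:: (1, [:: [::]; [:: t]]); (1, [:: [:: t]; [::]])]
  ++ [seq (1, [:: PC t C; [:: RC t C]]) | C <- adm_cuts t].

(* Delta is an algebra morphism *)
Definition Delta_forest (f : forest) : HT :=
  foldr mulT [:: (1, [:: [::]; [::]])] (map Delta_tree f).

Definition Delta (x : H) : HT :=
  flatten [seq scaleT e.1 (Delta_forest e.2) | e <- x].

Definition eps_forest (f : forest) : rat := if f is [::] then 1 else 0.

Definition Dtilde_forest (f : forest) : HT :=
  Delta_forest f ++ [:: (-1, [:: [::]; f]); (-1, [:: f; [::]])].

Definition Dtilde (x : H) : HT :=
  flatten [seq scaleT e.1 (Dtilde_forest e.2) | e <- x].

(* tilde Delta^0 = Id - eta o eps ;
   tilde Delta^(k+1) = (tilde Delta^k (x) Id) o tilde Delta *)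
Fixpoint Dtilde_pow_forest (k : nat) (f : forest) : HT :=
  match k with
  | 0%N => [:: (1, [:: f]); (- eps_forest f, [:: [::]])]
  | k'.+1 =>
      flatten [seq scaleT e.1
                 [seq (d.1, rcons d.2 (nth [::] e.2 1))
                 | d <- Dtilde_pow_forest k' (nth [::] e.2 0)]
              | e <- Dtilde_forest f]
  end.

Definition Dtilde_pow (k : nat) (x : H) : HT :=
  flatten [seq scaleT e.1 (Dtilde_pow_forest k e.2) | e <- x].

Definition prim (p : H) : Prop := eqT (Dtilde p) [::].

Fixpoint graft (t : rtree) (p : seq nat) (M : forest) : rtree :=
  match p with
  | [::] => let: RNode ts := t in RNode (ts ++ M)
  | i :: p' => let: RNode ts := t in
               RNode (set_nth leaf ts i (graft (nth leaf ts i) p' M))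
  end.

(* vertices of a forest: (index of the tree, address in that tree) *)
Definition fvertices (N : forest) : seq (nat * seq nat) :=
  flatten [seq [seq (j, p) | p <- vertices (nth leaf N j)] | j <- iota 0 (size N)].

Definition graftF (N : forest) (v : nat * seq nat) (M : forest) : forest :=
  set_nth leaf N v.1 (graft (nth leaf N v.1) v.2 M).

Definition top_forest (M N : forest) : H :=
  if N is [::] then [::]
  else [seq ((fweight N)%:R^-1, graftF N v M) | v <- fvertices N].

Definition topH (x y : H) : H :=
  flatten [seq scaleH (e.1 * d.1) (top_forest e.2 d.2) | e <- x, d <- y].

(* p_i top ... top p_1 := (p_i top ... top p_2) top p_1, for
   ps = [:: p_i; ...; p_1] *)
Definition top_seq (ps : seq H) : H :=
  if ps is p :: rest then foldl topH p rest else [::].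

(* Elements of Prim(H_R)^{(x) i}: finite combinations
   X = sum_j c_j p_{j,i} (x) ... (x) p_{j,1} of pure tensors of primitives. *)
Definition in_prim_tens (i : nat) (X : seq (rat * seq H)) : Prop :=
  forall c ps, (c, ps) \in X -> size ps = i /\ (forall p, p \in ps -> prim p).

(* the element of H_R^{(x) i} a pure tensor / such a combination stands for *)
Fixpoint pure_tensor (ps : seq H) : HT :=
  match ps with
  | [::] => [:: (1, [::])]
  | p :: ps' => [seq (e.1 * d.1, e.2 :: d.2) | e <- p, d <- pure_tensor ps']
  end.

Definition tens (X : seq (rat * seq H)) : HT :=
  flatten [seq scaleT e.1 (pure_tensor e.2) | e <- X].

Definition F (X : seq (rat * seq H)) : H :=
  flatten [seq scaleH e.1 (top_seq e.2) | e <- X].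

(* Main.v *)
Require Import Defs.
From mathcomp Require Import all_boot all_order all_algebra.
From mathcomp Require Import ring.
Set Implicit Arguments.
Unset Strict Implicit.
Unset Printing Implicit Defensive.
Import Order.TTheory GRing.Theory Num.Theory.
Local Open Scope ring_scope.

Section IntCalc.

Definition Int (K : Type) (x : seq (rat * K)) (g : K -> rat) : rat :=
  \sum_(e <- x) e.1 * g e.2.

Variable K : Type.
Implicit Types (x y : seq (rat * K)) (g h : K -> rat).

Lemma Int_nil g : Int [::] g = 0.
Proof. by rewrite /Int big_nil. Qed.

Lemma Int_cons e x g : Int (e :: x) g = e.1 * g e.2 + Int x g.
Proof. by rewrite /Int big_cons. Qed.

Lemma Int_cat x y g : Int (x ++ y) g = Int x g + Int y g.
Proof. by rewrite /Int big_cat. Qed.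

Lemma Int_add x g h : Int x (fun k => g k + h k) = Int x g + Int x h.
Proof. by rewrite /Int -big_split; apply: eq_bigr => e _; rewrite mulrDr. Qed.

Lemma Int_sub x g h : Int x (fun k => g k - h k) = Int x g - Int x h.
Proof. by rewrite /Int -sumrB; apply: eq_bigr => e _; rewrite mulrBr. Qed.

Lemma Int_scal x c g : Int x (fun k => c * g k) = c * Int x g.
Proof.
rewrite /Int mulr_sumr; apply: eq_bigr => e _.
by rewrite mulrA (mulrC e.1) mulrA.
Qed.

Lemma Int_scalr x c g : Int x (fun k => g k * c) = Int x g * c.
Proof.
by rewrite mulrC -Int_scal; apply: eq_bigr => e _; rewrite (mulrC c).
Qed.

Lemma Int0 x : Int x (fun _ => 0) = 0.
Proof. by rewrite /Int big1 // => e _; rewrite mulr0. Qed.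

Lemma eq_Int x g h : g =1 h -> Int x g = Int x h.
Proof. by move=> gh; apply: eq_bigr => e _; rewrite gh. Qed.

Lemma Int_scaleL c x g : Int [seq (c * e.1, e.2) | e <- x] g = c * Int x g.
Proof.
rewrite /Int big_map mulr_sumr; apply: eq_bigr => e _; by rewrite mulrA.
Qed.

Lemma Int_mapk (K' : Type) (f : K -> K') x (g : K' -> rat) :
  Int [seq (e.1, f e.2) | e <- x] g = Int x (fun k => g (f k)).
Proof. by rewrite /Int big_map. Qed.

Lemma Int_flat (K' : Type) (l : K -> seq (rat * K')) x (g : K' -> rat) :
  Int (flatten [seq [seq (e.1 * d.1, d.2) | d <- l e.2] | e <- x]) g =
  Int x (fun k => Int (l k) g).
Proof.
rewrite /Int big_flatten big_map; apply: eq_bigr => e _.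
by rewrite big_map mulr_sumr; apply: eq_bigr => d _; rewrite mulrA.
Qed.

Lemma Int_pair (K1 K2 : Type) (hh : K1 -> K2 -> K) (x1 : seq (rat * K1))
  (x2 : seq (rat * K2)) g :
  Int [seq (e.1 * d.1, hh e.2 d.2) | e <- x1, d <- x2] g =
  Int x1 (fun a => Int x2 (fun b => g (hh a b))).
Proof.
rewrite /Int big_allpairs_dep; apply: eq_bigr => e _.
by rewrite mulr_sumr; apply: eq_bigr => d _; rewrite mulrA.
Qed.

Lemma Int_swap (K2 : Type) x (y : seq (rat * K2)) (F : K -> K2 -> rat) :
  Int x (fun a => Int y (fun b => F a b)) = Int y (fun b => Int x (fun a => F a b)).
Proof.
rewrite /Int.
under eq_bigr do rewrite mulr_sumr.
rewrite exchange_big /=; apply: eq_bigr => d _.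
rewrite mulr_sumr; apply: eq_bigr => e _.
by rewrite !mulrA (mulrC e.1).
Qed.

Lemma Int_const x c : Int x (fun _ => c) = Int x (fun _ => 1) * c.
Proof. by rewrite -Int_scalr; apply: eq_Int => k; rewrite mul1r. Qed.

End IntCalc.

Lemma Int_eq (K : eqType) (x : seq (rat * K)) g h :
  (forall e, e \in x -> g e.2 = h e.2) -> Int x g = Int x h.
Proof. by move=> H; apply: eq_big_seq => e ex; rewrite H. Qed.

Section Classes.
Variables (K C : eqType) (cl : K -> C).

Definition coefc (x : seq (rat * K)) (b : K) : rat :=
  \sum_(e <- x | cl e.2 == cl b) e.1.
Definition invc (g : K -> rat) := forall a b, cl a = cl b -> g a = g b.

Lemma coefcE x b : coefc x b = Int x (fun a => (cl a == cl b)%:R).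
Proof.
rewrite /coefc /Int big_mkcond /=; apply: eq_bigr => e _.
by case: (_ == _); rewrite ?mulr1 ?mulr0.
Qed.

Lemma sum_pred1_uniq (U : seq C) (a : C) (F : C -> rat) :
  uniq U -> a \in U -> \sum_(c <- U | a == c) F c = F a.
Proof.
elim: U => [|c U IH] //= /andP[cU uU]; rewrite inE big_cons.
case: (eqVneq a c) => [->|ne] /=.
  rewrite big1_seq ?addr0 // => c' /andP[/eqP <- ]; by rewrite (negbTE cU).
by move=> aU; rewrite IH.
Qed.

Lemma lin_resp (k0 : K) x y : (forall b, coefc x b = coefc y b) ->
  forall g, invc g -> Int x g = Int y g.
Proof.
move=> Hxy g Hg.
set ks := map snd (x ++ y).
set U := undup (map cl ks).
pose rep c := nth k0 ks (index c (map cl ks)).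
have repP c : c \in map cl ks -> cl (rep c) = c.
  move=> cin; rewrite /rep -(nth_map k0 (cl k0)); last by rewrite -(size_map cl) index_mem.
  exact: nth_index.
have key z : {subset map snd z <= ks} ->
    Int z g = \sum_(c <- U) coefc z (rep c) * g (rep c).
  move=> sub.
  have E : Int z g = \sum_(e <- z) \sum_(c <- U | cl e.2 == c) e.1 * g (rep c).
    rewrite /Int; apply: eq_big_seq => e ez.
    have eks : e.2 \in ks by apply: sub; apply: map_f.
    have clU : cl e.2 \in U by rewrite mem_undup; apply: map_f.
    rewrite (sum_pred1_uniq (fun c => e.1 * g (rep c))) ?undup_uniq //.
    by rewrite (Hg _ (rep (cl e.2))) // repP // -mem_undup.
  rewrite E (exchange_big_dep xpredT) //=.
  apply: eq_big_seq => c cU.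
  rewrite /coefc mulr_suml; apply: eq_bigl => e /=.
  rewrite repP; last by rewrite -mem_undup.
  by rewrite eq_sym.
rewrite (key x) ?(key y) //.
- by apply: eq_bigr => c _; rewrite Hxy.
- by move=> k kin; rewrite /ks map_cat mem_cat kin orbT.
- by move=> k kin; rewrite /ks map_cat mem_cat kin.
Qed.

Lemma lin_eq x y : (forall g, invc g -> Int x g = Int y g) ->
  forall b, coefc x b = coefc y b.
Proof.
move=> H b; rewrite !coefcE; apply: H => a a' e; by rewrite e.
Qed.

End Classes.

Lemma rtree_ind' (P : rtree -> Prop) :
  (forall ts, (forall t, t \in ts -> P t) -> P (RNode ts)) -> forall t, P t.
Proof.
move=> Hyp; fix IH 1; case=> ts; apply: Hyp.
elim: ts => [|u ts IHts] t; first (rewrite in_nil; discriminate).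
rewrite inE => /orP[/eqP E|]; [rewrite E; exact: (IH u) | exact: IHts].
Qed.

Lemma forest_ind (P : forest -> Prop) :
  P [::] -> (forall ts N, P ts -> P N -> P (RNode ts :: N)) -> forall N, P N.
Proof.
move=> H0 Hc N; have [n] := ubnP (fweight N); elim: n N => // n IH [|[ts] N] // Hlt.
rewrite /fweight /= -/(fweight ts) -/(fweight N) in Hlt.
apply: Hc; apply: IH; rewrite ltnS in Hlt; apply: leq_trans Hlt; first by rewrite ltnS leq_addr.
by rewrite addSn ltnS leq_addl.
Qed.

Lemma tle_total : total tle.
Proof. by move=> a b; rewrite /tle leq_total. Qed.
Lemma tle_trans : transitive tle.
Proof. by move=> a b c; rewrite /tle; apply: leq_trans. Qed.
Lemma tle_anti : antisymmetric tle.
Proof.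
move=> a b; rewrite /tle -eqn_leq => /eqP e.
exact: (pcan_inj pickleK_inv).
Qed.

Lemma sort_tle_eq s1 s2 : (sort tle s1 == sort tle s2) = perm_eq s1 s2.
Proof.
by apply/eqP/idP => [|]; move/(perm_sortP tle_total tle_trans tle_anti).
Qed.

Lemma fcanonP a b : (fcanon a = fcanon b) <-> perm_eq (map canon a) (map canon b).
Proof. by rewrite /fcanon -sort_tle_eq; split => [->|/eqP]. Qed.

Lemma canon_RNode f : canon (RNode f) = RNode (fcanon f).
Proof. by []. Qed.

Lemma canonK t : canon (canon t) = canon t.
Proof.
elim/rtree_ind': t => ts IH /=; congr RNode.
have -> : [seq canon i | i <- sort tle [seq canon i | i <- ts]] = sort tle [seq canon i | i <- ts].
  rewrite -[RHS]map_id; apply/eq_in_map => x; rewrite mem_sort => /mapP[u uin ->]; exact: IH.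
apply: sorted_sort; first exact: tle_trans.
exact: sort_sorted tle_total _.
Qed.

Lemma fcanonK a : fcanon (fcanon a) = fcanon a.
Proof.
rewrite /fcanon; apply/fcanonP.
have -> : [seq canon i | i <- sort tle [seq canon i | i <- a]] = sort tle [seq canon i | i <- a].
  rewrite -[RHS]map_id; apply/eq_in_map => x; rewrite mem_sort => /mapP[u _ ->]; exact: canonK.
by rewrite perm_sort.
Qed.

Lemma fcanon_cat a a' b b' : fcanon a = fcanon a' -> fcanon b = fcanon b' ->
  fcanon (a ++ b) = fcanon (a' ++ b').
Proof.
move=> /fcanonP pa /fcanonP pb; apply/fcanonP; rewrite !map_cat.
by rewrite (perm_cat pa pb).
Qed.

Lemma fcanon_catC a b : fcanon (a ++ b) = fcanon (b ++ a).
Proof. by apply/fcanonP; rewrite !map_cat perm_catC. Qed.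

Lemma fcanon_nil a : (fcanon a == [::]) = (a == [::]).
Proof. by case: a => //= t a; rewrite /fcanon -size_eq0 size_sort. Qed.

Lemma fcanon_map_canon a : fcanon (map canon a) = fcanon a.
Proof.
apply/fcanonP; rewrite -map_comp (@eq_map _ _ (canon \o canon) canon) //.
by move=> t /=; rewrite canonK.
Qed.

Lemma fcanon1 t : fcanon [:: t] = [:: canon t].
Proof. by []. Qed.

Lemma fcanon_RNode f f' : fcanon f = fcanon f' -> fcanon [:: RNode f] = fcanon [:: RNode f'].
Proof. by rewrite !fcanon1 !canon_RNode => ->. Qed.

Lemma weight_canon t : weight (canon t) = weight t.
Proof.
elim/rtree_ind': t => ts IH /=; congr S.
have P : perm_eq (sort tle (map canon ts)) (map canon ts) by rewrite perm_sort.
rewrite (perm_sumn (perm_map weight P)) -map_comp; congr sumn; apply/eq_in_map => u uin /=; exact: IH.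
Qed.

Lemma fweight_canon a b : fcanon a = fcanon b -> fweight a = fweight b.
Proof.
move=> /fcanonP p; rewrite /fweight.
have -> : map weight a = map weight (map canon a).
  by rewrite -map_comp; apply: eq_map => t /=; rewrite weight_canon.
have -> : map weight b = map weight (map canon b).
  by rewrite -map_comp; apply: eq_map => t /=; rewrite weight_canon.
by apply: perm_sumn; apply: perm_map.
Qed.

Lemma fweight_cat a b : fweight (a ++ b) = (fweight a + fweight b)%N.
Proof. by rewrite /fweight map_cat sumn_cat. Qed.

Lemma weight_gt0 t : (0 < weight t)%N.
Proof. by case: t. Qed.

Lemma fweight_eq0 a : (fweight a == 0%N) = (a == [::]).
Proof.
case: a => //= t a; rewrite /fweight /= addn_eq0.
by case: t.
Qed.

Definition invH (g : forest -> rat) := invc fcanon g.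
Definition invT (g : seq forest -> rat) := invc (map fcanon) g.


Notation d0 a := (nth [::] a 0).
Notation d1 a := (nth [::] a 1).

Fixpoint vaux (n : nat) (us : seq rtree) : seq (seq nat) :=
  if us is u :: us' then map (cons n) (vertices u) ++ vaux n.+1 us' else [::].

Lemma verticesE ts : vertices (RNode ts) = [::] :: vaux 0 ts.
Proof. rewrite /=; congr cons; elim: ts 0%N => //= u us IH n; by rewrite IH. Qed.

Lemma vaux_head n us v : v \in vaux n us -> (v != [::]) && (n <= head 0%N v)%N.
Proof.
elim: us n => [|u us IH] n //=; rewrite mem_cat => /orP[/mapP[w _ ->]|/IH] //=.
by case/andP => -> /ltnW.
Qed.

Definition condV (V C : seq (seq nat)) : bool :=
  all (fun v => count (fun c => prefix c v) C <= 1)%N V.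

Lemma edgesE ts : edges (RNode ts) = vaux 0 ts.
Proof.
rewrite /edges verticesE /=; apply/all_filterP/allP => v /vaux_head /andP[] //.
Qed.

Lemma vertices_edges u : vertices u = [::] :: edges u.
Proof. by case: u => ts; rewrite edgesE verticesE. Qed.

Lemma edges_nonnil u e : e \in edges u -> e != [::].
Proof. by case: u => ts; rewrite edgesE => /vaux_head/andP[]. Qed.

Fixpoint pa (C : seq (seq nat)) (i : nat) (us : seq rtree) : seq rtree :=
  match us with
  | [::] => [::]
  | u :: us' =>
      if [:: i] \in C then pa C i.+1 us'
      else prune u [seq behead c | c <- C & (c != [::]) && (head 0%N c == i)]
             :: pa C i.+1 us'
  end.

Lemma pruneE ts C : prune (RNode ts) C = RNode (pa C 0 ts).
Proof.
rewrite /=; congr RNode; generalize 0%N at 2 3.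
elim: ts => //= u us IH n; by rewrite IH.
Qed.

Lemma prune_nil t : prune t [::] = t.
Proof.
elim/rtree_ind': t => ts IH; rewrite pruneE; congr RNode.
elim: ts 0%N IH => //= u us IHu n IH; rewrite IH ?inE ?eqxx // IHu // => t tin.
by apply: IH; rewrite inE tin orbT.
Qed.

Lemma pa_catl X Y m us :
  (forall c, c \in X -> (c != [::]) && (head 0%N c < m)%N) ->
  pa (X ++ Y) m us = pa Y m us.
Proof.
elim: us m => [|u us IH] m HX //=.
have -> : ([:: m] \in X ++ Y) = ([:: m] \in Y).
  rewrite mem_cat; case: ([:: m] \in X) / boolP => // /HX /=; by rewrite ltnn.
rewrite IH; last by move=> c /HX /andP[-> /ltnW].
rewrite filter_cat (@eq_in_filter _ _ pred0 X) ?filter_pred0 //.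
move=> c /HX /andP[-> lt] /=; apply/negbTE/eqP => e; by rewrite e ltnn in lt.
Qed.

Definition subF (n : nat) (ts : seq rtree) (c : seq nat) : rtree :=
  subtree (nth leaf ts (head 0%N c - n)) (behead c).

Lemma PCE ts C : (forall c, c \in C -> c != [::]) ->
  PC (RNode ts) C = map (subF 0 ts) C.
Proof.
move=> H; apply/eq_in_map => c /H; case: c => //= i p _; rewrite /subF /= subn0; by case: ts.
Qed.

Lemma mem_subseqs (T : eqType) (s : seq T) C : C \in subseqs s -> subseq C s.
Proof.
elim: s C => [|x s IH] C /=; first by rewrite inE => /eqP->.
rewrite mem_cat => /orP[/mapP[D /IH sD ->]|/IH sC].
  by rewrite /= eqxx.
exact: (subseq_trans sC (subseq_cons s x)).
Qed.

Lemma subseqs_map (T T' : Type) (f : T -> T') s :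
  subseqs (map f s) = map (map f) (subseqs s).
Proof. elim: s => //= x s ->; by rewrite map_cat -!map_comp. Qed.

Lemma sum_subseqs_cat (T : Type) (A B : seq T) (phi : seq T -> rat) :
  \sum_(C <- subseqs (A ++ B)) phi C =
  \sum_(C1 <- subseqs A) \sum_(C2 <- subseqs B) phi (C1 ++ C2).
Proof.
elim: A phi => [|x A IH] phi /=; first by rewrite big_cons big_nil addr0.
by rewrite !big_cat !big_map /= IH (IH phi).
Qed.

Lemma sum_subseqs_nil (T : Type) (s : seq T) (phi : seq T -> rat) :
  \sum_(D <- subseqs s | nilp D) phi D = phi [::].
Proof.
elim: s => [|x s IH] /=; first by rewrite big_cons big_nil addr0.
by rewrite big_cat big_map /= big_pred0 ?add0r.
Qed.

Lemma prefix_head (c v : seq nat) : prefix c v -> c != [::] -> v != [::] ->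
  head 0%N c = head 0%N v.
Proof. by case: c => // x c; case: v => // y v /= /andP[/eqP ->]. Qed.

Lemma condV_cat A B X : condV (A ++ B) X = condV A X && condV B X.
Proof. by rewrite /condV all_cat. Qed.

Lemma condV_map n V C : condV (map (cons n) V) (map (cons n) C) = condV V C.
Proof.
rewrite /condV all_map; apply: eq_all => v /=; rewrite count_map.
by congr (_ <= _)%N; apply: eq_count => c /=; rewrite eqxx.
Qed.

Lemma split_nil (E : seq (seq nat)) (phi : seq (seq nat) -> rat) :
  (forall e, e \in E -> e != [::]) ->
  \sum_(D <- subseqs ([::] :: E) | condV ([::] :: E) D) phi D =
  phi [:: [::]] + \sum_(D <- subseqs E | condV E D) phi D.
Proof.
move=> HE /=; rewrite big_cat big_map /=; congr (_ + _).
  rewrite -(sum_subseqs_nil E (fun D => phi ([::] :: D))).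
  rewrite [LHS]big_seq_cond [RHS]big_seq_cond; apply: eq_bigl => D.
  case: (boolP (D \in subseqs E)) => //= /mem_subseqs sDE.
  case: D sDE => [|d D] sDE.
    by rewrite /condV /=; apply/allP => v _ /=; case: (prefix [::] v).
  apply/negbTE; rewrite /condV /=; apply/nandP; right; apply/allPn.
  have dE : d \in E by apply: (mem_subseq sDE); rewrite inE eqxx.
  exists d => //=; rewrite prefix0s prefix_refl.
  by rewrite -ltnNge !add1n.
rewrite [LHS]big_seq_cond [RHS]big_seq_cond; apply: eq_bigl => D.
case: (boolP (D \in subseqs E)) => //= /mem_subseqs sDE.
rewrite /condV /= (@eq_in_count _ _ pred0) ?count_pred0 // => c /(mem_subseq sDE) /HE /=.
by case: c.
Qed.

Lemma condV_uniq E C : subseq C E -> condV E C -> uniq C.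
Proof.
move=> sCE cond; apply: count_mem_uniq => x.
case: (boolP (x \in C)) => xC; last by apply/count_memPn.
have xE : x \in E by apply: (mem_subseq sCE).
have := allP cond x xE => /= le1.
apply/eqP; rewrite eqn_leq -has_count has_pred1 xC andbT.
apply: leq_trans le1; apply: sub_count => c /= /eqP ->; exact: prefix_refl.
Qed.

Lemma Int_Delta_tree u h :
  Int (Delta_tree u) h = h [:: [:: u]; [::]] +
    \sum_(D <- subseqs (edges u) | condV (edges u) D) h [:: PC u D; [:: RC u D]].
Proof.
rewrite /Delta_tree Int_cat !Int_cons Int_nil !mul1r addr0 /Int big_map /adm_cuts big_filter.
rewrite [X in _ = _ + X](bigID (@nilp _)) /=.
have -> : \sum_(i <- subseqs (edges u) | condV (edges u) i && nilp i) h [:: PC u i; [:: RC u i]]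
    = h [:: [::]; [:: u]].
  rewrite (eq_bigl (@nilp _)); last by move=> [|c D] /=; rewrite ?andbF ?andbT //; apply/allP.
  by rewrite (sum_subseqs_nil _ (fun D => h [:: PC u D; [:: RC u D]])) /RC prune_nil.
rewrite -addrA [in RHS]addrCA; congr (_ + (_ + _)).
rewrite [LHS]big_seq_cond [RHS]big_seq_cond; apply: eq_big => // D.
case: (boolP (D \in subseqs (edges u))) => //= /mem_subseqs sD.
2: by rewrite mul1r.
rewrite /admissible.
have nnD : forall c, c \in D -> c != [::] by move=> c /(mem_subseq sD) /edges_nonnil.
have allD : all (fun c => c \in edges u) D by apply/allP => c /(mem_subseq sD).
rewrite allD vertices_edges /= (@eq_in_count _ _ pred0) ?count_pred0; last first.
  by move=> c /nnD; case: c.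
rewrite -/(condV (edges u) D) /=.
case: (boolP (condV (edges u) D)) => cD /=; last by rewrite !andbF.
rewrite (condV_uniq sD cD) andbT; by case: D {sD nnD allD cD}.
Qed.

Lemma size_mulT x y : (forall e, e \in x -> size e.2 = 2%N) ->
  (forall e, e \in y -> size e.2 = 2%N) -> forall e, e \in mulT x y -> size e.2 = 2%N.
Proof.
move=> Hx Hy e /allpairsP[[e1 e2] [/= /Hx s1 /Hy s2 ->]] /=.
by rewrite size_map size_zip s1 s2.
Qed.

Lemma size_Delta_tree t e : e \in Delta_tree t -> size e.2 = 2%N.
Proof.
rewrite /Delta_tree cat_cons cat_cons !inE => /orP[/eqP->|/orP[/eqP->|/mapP[C _ ->]]] //.
Qed.

Lemma size_Delta_forest f e : e \in Delta_forest f -> size e.2 = 2%N.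
Proof.
elim: f e => [|t f IH] e /=; first by rewrite inE => /eqP->.
by apply: size_mulT => //; apply: size_Delta_tree.
Qed.

Lemma zip2 (a b : seq forest) : size a = 2%N -> size b = 2%N ->
  [seq p.1 ++ p.2 | p <- zip a b] = [:: d0 a ++ d0 b; d1 a ++ d1 b].
Proof. by case: a => [|a0 [|a1 []]] //; case: b => [|b0 [|b1 []]]. Qed.

Lemma Int_mulT x y g : Int (mulT x y) g =
  Int x (fun a => Int y (fun b => g [seq p.1 ++ p.2 | p <- zip a b])).
Proof. exact: Int_pair. Qed.

Lemma Int_DF_nil g : Int (Delta_forest [::]) g = g [:: [::]; [::]].
Proof. by rewrite /= Int_cons Int_nil mul1r addr0. Qed.

Lemma Int_DF_cons t f g : Int (Delta_forest (t :: f)) g =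
  Int (Delta_tree t) (fun a => Int (Delta_forest f)
    (fun b => g [:: d0 a ++ d0 b; d1 a ++ d1 b])).
Proof.
rewrite /= -/(Delta_forest f) Int_mulT; apply: Int_eq => e /size_Delta_tree He.
apply: Int_eq => d /size_Delta_forest Hd; by rewrite zip2.
Qed.

Lemma Int_DT2 t g : Int (Delta_tree t) g = Int (Delta_tree t) (fun a => g [:: d0 a; d1 a]).
Proof.
apply: Int_eq => e /size_Delta_tree; case: e => c [|a0 [|a1 []]] //.
Qed.

Lemma Int_DF2 f g : Int (Delta_forest f) g = Int (Delta_forest f) (fun a => g [:: d0 a; d1 a]).
Proof.
apply: Int_eq => e /size_Delta_forest; case: e => c [|a0 [|a1 []]] //.
Qed.

Lemma Int_DF_cat A B g : Int (Delta_forest (A ++ B)) g =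
  Int (Delta_forest A) (fun a => Int (Delta_forest B)
    (fun b => g [:: d0 a ++ d0 b; d1 a ++ d1 b])).
Proof.
elim: A g => [|t A IH] g /=; first by rewrite Int_DF_nil /= -Int_DF2.
rewrite Int_DF_cons Int_DF_cons; apply: eq_Int => a; rewrite IH.
apply: eq_Int => a' /=; apply: eq_Int => b; by rewrite !catA.
Qed.

Lemma Int_DF1 t g : Int (Delta_forest [:: t]) g = Int (Delta_tree t) g.
Proof.
rewrite Int_DF_cons [RHS]Int_DT2; apply: eq_Int => a /=; by rewrite Int_DF_nil /= !cats0.
Qed.

Lemma step_terms n u us D C2 (G : forest -> forest -> rat) :
  subseq D (vertices u) -> subseq C2 (vaux n.+1 us) ->
  (if condV (map (cons n) (vertices u) ++ vaux n.+1 us) (map (cons n) D ++ C2)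
   then G (map (subF n (u :: us)) (map (cons n) D ++ C2))
          (pa (map (cons n) D ++ C2) n (u :: us)) else 0)
  = if condV (vertices u) D && condV (vaux n.+1 us) C2
    then G (map (subtree u) D ++ map (subF n.+1 us) C2)
           ((if [::] \in D then [::] else [:: prune u D]) ++ pa C2 n.+1 us)
    else 0.
Proof.
move=> sD sC2.
have hC2 c : c \in C2 -> (c != [::]) && (n.+1 <= head 0%N c)%N.
  by move=> /(mem_subseq sC2) /vaux_head.
have -> : condV (map (cons n) (vertices u) ++ vaux n.+1 us) (map (cons n) D ++ C2)
    = condV (vertices u) D && condV (vaux n.+1 us) C2.
  rewrite condV_cat -(condV_map n (vertices u) D); congr (_ && _).
    rewrite /condV; apply: eq_in_all => v /mapP[w _ ->].
    rewrite count_cat (@eq_in_count _ _ pred0 C2) ?count_pred0 ?addn0 //.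
    move=> c /hC2 /andP[cn hc]; apply/negbTE/negP => /prefix_head /(_ cn isT) /= e.
    by rewrite e ltnn in hc.
  rewrite /condV; apply: eq_in_all => v /vaux_head /andP[vn hv].
  rewrite count_cat (@eq_in_count _ _ pred0 (map (cons n) D)) ?count_pred0 ?add0n //.
  move=> c /mapP[d _ ->]; apply/negbTE/negP => /prefix_head /(_ isT vn) /= e.
  by rewrite -e ltnn in hv.
case: (_ && _) => //.
congr G.
  rewrite map_cat -map_comp; congr (_ ++ _).
    apply: eq_map => d /=; by rewrite /subF /= subnn.
  apply/eq_in_map => c /hC2; case: c => // m p /= hm.
  rewrite /subF /=; have -> : (m - n = (m - n.+1).+1)%N by rewrite subnS prednK // subn_gt0.
  by [].
rewrite /= pa_catl; last by move=> c /mapP[d _ ->] /=.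
have -> : ([:: n] \in map (cons n) D ++ C2) = ([::] \in D).
  rewrite mem_cat (mem_map (fun a b (e : n :: a = n :: b) => congr1 behead e)).
  case: ([:: n] \in C2) / boolP => [/hC2 /= |]; first by rewrite ltnn.
  by rewrite orbF.
case: ([::] \in D) => //=.
rewrite filter_cat (@eq_in_filter _ _ pred0 C2) ?filter_pred0; last first.
  move=> c /hC2 /andP[-> hc] /=; apply/negbTE/eqP => e; by rewrite e ltnn in hc.
rewrite cats0 (@eq_in_filter _ _ predT) ?filter_predT; last by move=> c /mapP[d _ ->] /=; rewrite eqxx.
by rewrite -map_comp map_id.
Qed.

Lemma forest_cuts n ts (G : forest -> forest -> rat) :
  \sum_(C <- subseqs (vaux n ts) | condV (vaux n ts) C) G (map (subF n ts) C) (pa C n ts)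
  = Int (Delta_forest ts) (fun a => G (d0 a) (d1 a)).
Proof.
elim: ts n G => [|u us IH] n G.
  by rewrite /= big_cons big_nil Int_DF_nil /= addr0.
rewrite Int_DF_cons Int_Delta_tree [vaux n _]/= big_mkcond sum_subseqs_cat subseqs_map big_map.
transitivity (\sum_(D <- subseqs (vertices u) | condV (vertices u) D)
   \sum_(C2 <- subseqs (vaux n.+1 us) | condV (vaux n.+1 us) C2)
     G (map (subtree u) D ++ map (subF n.+1 us) C2)
       ((if [::] \in D then [::] else [:: prune u D]) ++ pa C2 n.+1 us)).
  rewrite [RHS]big_mkcond; apply: eq_big_seq => D /mem_subseqs sD.
  case: (boolP (condV (vertices u) D)) => cD.
    rewrite [RHS]big_mkcond; apply: eq_big_seq => C2 /mem_subseqs sC2.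
    by rewrite step_terms // cD.
  by apply: big1_seq => C2 /mem_subseqs sC2; rewrite step_terms // (negbTE cD).
rewrite vertices_edges split_nil; last exact: edges_nonnil.
congr (_ + _).
  etransitivity; first exact: (IH n.+1 (fun P R => G ([:: u] ++ P) ([::] ++ R))).
  by apply: eq_Int.
rewrite [LHS]big_seq_cond [RHS]big_seq_cond; apply: eq_bigr => D /andP[/mem_subseqs sD _].
have -> : ([::] \in D) = false.
  by apply/negbTE/negP => /(mem_subseq sD) /edges_nonnil.
etransitivity; first exact: (IH n.+1 (fun P R => G (map (subtree u) D ++ P) ([:: prune u D] ++ R))).
by apply: eq_Int.
Qed.

Lemma Int_Delta_RNode ts h :
  Int (Delta_tree (RNode ts)) h = h [:: [:: RNode ts]; [::]] +
    Int (Delta_forest ts) (fun a => h [:: d0 a; [:: RNode (d1 a)]]).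
Proof.
rewrite Int_Delta_tree edgesE; congr (_ + _).
rewrite -(forest_cuts 0 ts (fun P R => h [:: P; [:: RNode R]])).
rewrite [LHS]big_seq_cond [RHS]big_seq_cond; apply: eq_bigr => C /andP[/mem_subseqs sC _].
rewrite /RC pruneE PCE // => c /(mem_subseq sC) /vaux_head /andP[] //.
Qed.

Definition SL (M N : forest) (phi : forest -> rat) : rat :=
  \sum_(v <- fvertices N) phi (graftF N v M).

Lemma SLE M N phi : SL M N phi =
  \sum_(j <- iota 0 (size N)) \sum_(p <- vertices (nth leaf N j)) phi (graftF N (j, p) M).
Proof. by rewrite /SL /fvertices big_flatten big_map; apply: eq_bigr => j _; rewrite big_map. Qed.

Lemma set_nth_catl (T : Type) (x0 : T) (A B : seq T) j y : (j < size A)%N ->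
  set_nth x0 (A ++ B) j y = set_nth x0 A j y ++ B.
Proof. by elim: A j => [|a A IH] [|j] //= H; rewrite IH. Qed.

Lemma set_nth_catr (T : Type) (x0 : T) (A B : seq T) j y :
  set_nth x0 (A ++ B) (size A + j) y = A ++ set_nth x0 B j y.
Proof. by elim: A => [|a A IH] //=; rewrite IH. Qed.

Lemma SL_cat M A B phi :
  SL M (A ++ B) phi = SL M A (fun x => phi (x ++ B)) + SL M B (fun y => phi (A ++ y)).
Proof.
rewrite !SLE size_cat iotaD big_cat /= add0n; congr (_ + _).
  apply: eq_big_seq => j; rewrite mem_iota add0n => /andP[_ lt].
  rewrite nth_cat lt; apply: eq_bigr => p _; rewrite /graftF /= nth_cat lt set_nth_catl //.
have -> : iota (size A) (size B) = map (addn (size A)) (iota 0 (size B)).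
  by rewrite -iotaDl addn0.
rewrite big_map; apply: eq_bigr => j _.
rewrite nth_cat ltnNge leq_addr /= addKn.
apply: eq_bigr => p _; rewrite /graftF /= nth_cat ltnNge leq_addr /= addKn.
by rewrite set_nth_catr.
Qed.

Lemma sum_vaux n ts (F : seq nat -> rat) :
  \sum_(v <- vaux n ts) F v =
  \sum_(j <- iota n (size ts)) \sum_(p <- vertices (nth leaf ts (j - n))) F (j :: p).
Proof.
elim: ts n => [|u us IH] n /=; first by rewrite !big_nil.
rewrite big_cat big_cons big_map subnn /= IH; congr (_ + _).
apply: eq_big_seq => j; rewrite mem_iota => /andP[lt _].
have -> : (j - n = (j - n.+1).+1)%N by rewrite subnS prednK // subn_gt0.
by [].
Qed.

Lemma SL_RNode M ts phi :
  SL M [:: RNode ts] phi = phi [:: RNode (ts ++ M)] + SL M ts (fun y => phi [:: RNode y]).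
Proof.
rewrite SLE /= big_cons big_nil addr0 verticesE big_cons /=; congr (_ + _).
rewrite sum_vaux SLE; apply: eq_bigr => j _; rewrite subn0.
by apply: eq_bigr => p _.
Qed.

Lemma SL_nil M phi : SL M [::] phi = 0.
Proof. by rewrite /SL /fvertices big_nil. Qed.

Lemma SL_add M N phi psi : SL M N (fun x => phi x + psi x) = SL M N phi + SL M N psi.
Proof. by rewrite /SL big_split. Qed.

Lemma SL_scal M N c phi : SL M N (fun x => c * phi x) = c * SL M N phi.
Proof. by rewrite /SL mulr_sumr. Qed.

Lemma SL_Int M N (K : Type) (x : seq (rat * K)) (F : forest -> K -> rat) :
  SL M N (fun f => Int x (F f)) = Int x (fun k => SL M N (fun f => F f k)).
Proof.
rewrite /SL /Int exchange_big /=; apply: eq_bigr => e _; by rewrite mulr_sumr.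
Qed.

Lemma Int_SL M N (K : Type) (x : seq (rat * K)) (F : forest -> K -> rat) :
  Int x (fun k => SL M N (fun f => F f k)) = SL M N (fun f => Int x (F f)).
Proof. by rewrite SL_Int. Qed.

Lemma top_forestE M N phi :
  Int (top_forest M N) phi = (fweight N)%:R^-1 * SL M N phi.
Proof.
case: N => [|t N]; first by rewrite /= Int_nil SL_nil mulr0.
by rewrite /top_forest /Int big_map /SL mulr_sumr.
Qed.

Lemma SL_nilM N phi : SL [::] N phi = (fweight N)%:R * phi N.
Proof.
elim/forest_ind: N phi => [|ts N IHts IHN] phi; first by rewrite SL_nil mul0r.
rewrite -cat1s SL_cat SL_RNode cats0 IHts IHN /= /fweight /= -/(fweight ts) -/(fweight N).
rewrite !natrD -addn1 natrD; ring.
Qed.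

Lemma graftF_nonnil N v M : graftF N v M != [::].
Proof. by rewrite /graftF -size_eq0 size_set_nth -lt0n leq_max ltn0Sn. Qed.

Section GenInv.
Variable R : forest -> forest -> Prop.
Hypothesis Rrefl : forall f, R f f.
Hypothesis Rsym : forall f g, R f g -> R g f.
Hypothesis Rtrans : forall f g h, R f g -> R g h -> R f h.
Hypothesis Rcat : forall a a' b b', R a a' -> R b b' -> R (a ++ b) (a' ++ b').
Hypothesis RC : forall a b, R (a ++ b) (b ++ a).

Lemma R_perm s s' : perm_eq s s' -> R s s'.
Proof.
elim: s s' => [|x s IH] s' p.
  by move: p; rewrite perm_sym => /perm_nilP ->.
have xin : x \in s' by rewrite -(perm_mem p) inE eqxx.
move: p; case/splitPr: xin => s1 s2 p.
have p' : perm_eq s (s1 ++ s2).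
  by rewrite -(perm_cons x); apply: (perm_trans p); rewrite -cat1s perm_catCA.
apply: (Rtrans (g := [:: x] ++ (s1 ++ s2))); first by rewrite -[x :: s]cat1s; apply: Rcat => //; exact: IH.
have -> : s1 ++ x :: s2 = (s1 ++ [:: x]) ++ s2 by rewrite -catA.
rewrite catA; apply: Rcat => //; exact: RC.
Qed.

Lemma R_canon f : (forall t, t \in f -> R [:: t] [:: canon t]) -> R f (map canon f).
Proof.
elim: f => [|t f IH] H //=.
rewrite -cat1s -[_ :: map canon f]cat1s; apply: Rcat.
  by apply: H; rewrite inE eqxx.
by apply: IH => u uf; apply: H; rewrite inE uf orbT.
Qed.

Lemma R_fcanon f f' : (forall t, R [:: t] [:: canon t]) -> fcanon f = fcanon f' -> R f f'.
Proof.
move=> Ht /fcanonP p.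
apply: (Rtrans (R_canon (fun t _ => Ht t))).
apply: (Rtrans (R_perm p)); apply: Rsym; exact: (R_canon (fun t _ => Ht t)).
Qed.

Lemma R_fcanonK ts : (forall t, t \in ts -> R [:: t] [:: canon t]) -> R ts (fcanon ts).
Proof.
move=> H; apply: (Rtrans (R_canon H)); apply: R_perm.
by rewrite /fcanon perm_sym perm_sort.
Qed.

End GenInv.

Lemma fcanon_nth (a b : seq forest) i : map fcanon a = map fcanon b ->
  fcanon (nth [::] a i) = fcanon (nth [::] b i).
Proof.
move=> e; have sz : size a = size b by rewrite -(size_map fcanon) e size_map.
case: (ltnP i (size a)) => H.
  by rewrite -!(nth_map [::] [::]) -?sz // e.
by rewrite !nth_default // -sz.
Qed.

Definition RD (f f' : forest) := forall g, invT g ->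
  Int (Delta_forest f) g = Int (Delta_forest f') g.

Lemma invT_catl (x : seq forest) g : invT g ->
  invT (fun y => g [:: d0 x ++ d0 y; d1 x ++ d1 y]).
Proof.
move=> Hg a b /fcanon_nth E; apply: Hg => /=.
by rewrite (fcanon_cat (erefl _) (E 0%N)) (fcanon_cat (erefl _) (E 1%N)).
Qed.

Lemma RD_cat a a' b b' : RD a a' -> RD b b' -> RD (a ++ b) (a' ++ b').
Proof.
move=> Ha Hb g Hg; rewrite !Int_DF_cat.
under eq_Int => x do rewrite (Hb _ (invT_catl x Hg)).
apply: Ha => x x' /fcanon_nth E; apply: eq_Int => y; apply: Hg => /=.
by rewrite (fcanon_cat (E 0%N) (erefl _)) (fcanon_cat (E 1%N) (erefl _)).
Qed.

Lemma RD_C a b : RD (a ++ b) (b ++ a).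
Proof.
move=> g Hg; rewrite !Int_DF_cat Int_swap; apply: eq_Int => y; apply: eq_Int => x.
by apply: Hg => /=; rewrite fcanon_catC (fcanon_catC (d1 x)).
Qed.

Lemma RD_tree t : RD [:: t] [:: canon t].
Proof.
elim/rtree_ind': t => ts IH g Hg.
have Hts : RD ts (fcanon ts).
  apply: R_fcanonK => //; [by move=> f g' h; move=> H1 H2 g1 Hg1; rewrite H1 // H2 |
     exact: RD_cat | exact: RD_C].
rewrite !Int_DF1 canon_RNode !Int_Delta_RNode; congr (_ + _).
  by apply: Hg => /=; congr [:: _; _]; apply: fcanon_RNode; rewrite fcanonK.
apply: Hts => a b /fcanon_nth E; apply: Hg => /=; rewrite (E 0%N).
by rewrite (fcanon_RNode (E 1%N)).
Qed.

Lemma DF_inv f f' : fcanon f = fcanon f' -> RD f f'.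
Proof.
apply: R_fcanon => //.
- by move=> f1 g1 H g Hg; rewrite H.
- by move=> f1 g1 h1 H1 H2 g Hg; rewrite H1 // H2.
- exact: RD_cat.
- exact: RD_C.
- exact: RD_tree.
Qed.

Definition RL (M : forest) (f f' : forest) := fcanon f = fcanon f' /\
  forall phi, invH phi -> SL M f phi = SL M f' phi.

Lemma RL_cat M a a' b b' : RL M a a' -> RL M b b' -> RL M (a ++ b) (a' ++ b').
Proof.
move=> [ca Ha] [cb Hb]; split; first exact: fcanon_cat.
move=> phi Hphi; rewrite !SL_cat; congr (_ + _).
  rewrite Ha; last by move=> x y e; apply: Hphi; exact: fcanon_cat.
  by apply: eq_bigr => v _; apply: Hphi; exact: fcanon_cat.
rewrite Hb; last by move=> x y e; apply: Hphi; exact: fcanon_cat.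
by apply: eq_bigr => v _; apply: Hphi; exact: fcanon_cat.
Qed.

Lemma RL_C M a b : RL M (a ++ b) (b ++ a).
Proof.
split; first exact: fcanon_catC.
move=> phi Hphi; rewrite !SL_cat addrC; congr (_ + _); apply: eq_bigr => v _;
  apply: Hphi; exact: fcanon_catC.
Qed.

Lemma RL_refl M f : RL M f f.
Proof. by split. Qed.
Lemma RL_sym M f g : RL M f g -> RL M g f.
Proof. by move=> [e H]; split => // phi Hphi; rewrite H. Qed.
Lemma RL_trans M f g h : RL M f g -> RL M g h -> RL M f h.
Proof. by move=> [e1 H1] [e2 H2]; split; [rewrite e1 | move=> phi Hphi; rewrite H1 // H2]. Qed.

Lemma RL_tree M t : RL M [:: t] [:: canon t].
Proof.
elim/rtree_ind': t => ts IH; split; first by rewrite !fcanon1 canonK.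
have Hts : RL M ts (fcanon ts).
  exact: (R_fcanonK (@RL_refl M) (@RL_trans M) (@RL_cat M) (@RL_C M) IH).
move=> phi Hphi; rewrite canon_RNode !SL_RNode; congr (_ + _).
  apply: Hphi; apply: fcanon_RNode; apply: fcanon_cat => //; by rewrite fcanonK.
case: Hts => _ ->; first by [].
move=> x y e; apply: Hphi; exact: fcanon_RNode.
Qed.

Lemma SL_inv M N N' phi : fcanon N = fcanon N' -> invH phi -> SL M N phi = SL M N' phi.
Proof.
move=> e Hphi; suff [_ ->] : RL M N N' by [].
exact: (R_fcanon (@RL_refl M) (@RL_sym M) (@RL_trans M) (@RL_cat M) (@RL_C M) (@RL_tree M) e).
Qed.

Lemma SL_invM M M' N phi : fcanon M = fcanon M' -> invH phi -> SL M N phi = SL M' N phi.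
Proof.
move=> eM; elim/forest_ind: N phi => [|ts N IHts IHN] phi Hphi; first by rewrite !SL_nil.
rewrite -cat1s !SL_cat !SL_RNode; congr (_ + _ + _).
- apply: Hphi; apply: fcanon_cat => //; apply: fcanon_RNode; exact: fcanon_cat.
- apply: IHts => x y e; apply: Hphi; apply: fcanon_cat => //; exact: fcanon_RNode.
- apply: IHN => x y e; apply: Hphi; exact: fcanon_cat.
Qed.

Lemma eq_SL M N phi psi : phi =1 psi -> SL M N phi = SL M N psi.
Proof. by move=> e; apply: eq_bigr => v _; rewrite e. Qed.

Lemma DL M N g : invT g ->
  SL M N (fun f => Int (Delta_forest f) g) =
  Int (Delta_forest N) (fun a => SL M (d0 a) (fun x => g [:: x; d1 a])) +
  Int (Delta_forest N) (fun a => Int (Delta_forest M)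
     (fun m => SL (d1 m) (d1 a) (fun y => g [:: d0 a ++ d0 m; y]))).
Proof.
elim/forest_ind: N g => [|ts N IHts IHN] g Hg.
  rewrite !Int_DF_nil /= !SL_nil; under eq_Int => m do rewrite SL_nil.
  by rewrite Int0 !addr0.
pose h := fun a : seq forest => Int (Delta_forest N) (fun b => g [:: d0 a ++ d0 b; d1 a ++ d1 b]).
pose g2 := fun c : seq forest => h [:: d0 c; [:: RNode (d1 c)]].
have Hh : invT h.
  move=> a a' /fcanon_nth E; apply: eq_Int => b; apply: Hg => /=.
  by rewrite (fcanon_cat (E 0%N) (erefl _)) (fcanon_cat (E 1%N) (erefl _)).
have Hg2 : invT g2.
  move=> a a' /fcanon_nth E; apply: Hh => /=; by rewrite (E 0%N) (fcanon_RNode (E 1%N)).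
rewrite -cat1s SL_cat SL_RNode.
have L1 : Int (Delta_forest ([:: RNode (ts ++ M)] ++ N)) g =
   h [:: [:: RNode (ts ++ M)]; [::]] + Int (Delta_forest ts) (fun a =>
     Int (Delta_forest M) (fun m => h [:: d0 a ++ d0 m; [:: RNode (d1 a ++ d1 m)]])).
  by rewrite Int_DF_cat Int_DF1 Int_Delta_RNode Int_DF_cat.
have L2 : SL M ts (fun y => Int (Delta_forest ([:: RNode y] ++ N)) g) =
   SL M ts (fun y => h [:: [:: RNode y]; [::]]) +
   (Int (Delta_forest ts) (fun a => SL M (d0 a) (fun x => g2 [:: x; d1 a])) +
    Int (Delta_forest ts) (fun a => Int (Delta_forest M)
       (fun m => SL (d1 m) (d1 a) (fun y => g2 [:: d0 a ++ d0 m; y])))).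
  rewrite -(IHts _ Hg2) -SL_add; apply: eq_SL => y.
  by rewrite Int_DF_cat Int_DF1 Int_Delta_RNode.
have L3 : SL M N (fun y => Int (Delta_forest ([:: RNode ts] ++ y)) g) =
   Int (Delta_forest [:: RNode ts]) (fun a =>
     Int (Delta_forest N) (fun b => SL M (d0 b) (fun x => g [:: d0 a ++ x; d1 a ++ d1 b]))) +
   Int (Delta_forest [:: RNode ts]) (fun a =>
     Int (Delta_forest N) (fun b => Int (Delta_forest M)
       (fun m => SL (d1 m) (d1 b) (fun y => g [:: d0 a ++ (d0 b ++ d0 m); d1 a ++ y])))).
  transitivity (SL M N (fun y => Int (Delta_forest [:: RNode ts]) (fun a =>
     Int (Delta_forest y) (fun b => g [:: d0 a ++ d0 b; d1 a ++ d1 b])))).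
    by apply: eq_SL => y; rewrite Int_DF_cat.
  rewrite SL_Int -Int_add; apply: eq_Int => a.
  by rewrite (IHN _ (invT_catl a Hg)).
have R1 : Int (Delta_forest ([:: RNode ts] ++ N)) (fun a => SL M (d0 a) (fun x => g [:: x; d1 a])) =
   Int (Delta_forest [:: RNode ts]) (fun a => SL M (d0 a) (fun x => h [:: x; d1 a])) +
   Int (Delta_forest [:: RNode ts]) (fun a =>
     Int (Delta_forest N) (fun b => SL M (d0 b) (fun x => g [:: d0 a ++ x; d1 a ++ d1 b]))).
  rewrite Int_DF_cat -Int_add; apply: eq_Int => a /=.
  under eq_Int => b do rewrite SL_cat.
  by rewrite Int_add Int_SL.
have R1a : Int (Delta_forest [:: RNode ts]) (fun a => SL M (d0 a) (fun x => h [:: x; d1 a])) =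
   h [:: [:: RNode (ts ++ M)]; [::]] + SL M ts (fun y => h [:: [:: RNode y]; [::]]) +
   Int (Delta_forest ts) (fun a => SL M (d0 a) (fun x => g2 [:: x; d1 a])).
  by rewrite Int_DF1 Int_Delta_RNode /= SL_RNode.
have R2 : Int (Delta_forest ([:: RNode ts] ++ N)) (fun a => Int (Delta_forest M)
        (fun m => SL (d1 m) (d1 a) (fun y => g [:: d0 a ++ d0 m; y]))) =
   Int (Delta_forest [:: RNode ts]) (fun a => Int (Delta_forest N) (fun b =>
     Int (Delta_forest M) (fun m =>
       SL (d1 m) (d1 a) (fun x => g [:: (d0 a ++ d0 b) ++ d0 m; x ++ d1 b])))) +
   Int (Delta_forest [:: RNode ts]) (fun a =>
     Int (Delta_forest N) (fun b => Int (Delta_forest M)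
       (fun m => SL (d1 m) (d1 b) (fun y => g [:: d0 a ++ (d0 b ++ d0 m); d1 a ++ y])))).
  rewrite Int_DF_cat -Int_add; apply: eq_Int => a; rewrite -Int_add; apply: eq_Int => b.
  rewrite -Int_add; apply: eq_Int => m /=; rewrite SL_cat; congr (_ + _).
  by apply: eq_SL => y; rewrite catA.
have R2a : Int (Delta_forest [:: RNode ts]) (fun a => Int (Delta_forest N) (fun b =>
     Int (Delta_forest M) (fun m =>
       SL (d1 m) (d1 a) (fun x => g [:: (d0 a ++ d0 b) ++ d0 m; x ++ d1 b])))) =
   Int (Delta_forest ts) (fun a =>
     Int (Delta_forest M) (fun m => h [:: d0 a ++ d0 m; [:: RNode (d1 a ++ d1 m)]])) +
   Int (Delta_forest ts) (fun a => Int (Delta_forest M)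
       (fun m => SL (d1 m) (d1 a) (fun y => g2 [:: d0 a ++ d0 m; y]))).
  rewrite Int_DF1 Int_Delta_RNode /=.
  under eq_Int => b do under eq_Int => m do rewrite SL_nil.
  have -> : Int (Delta_forest N) (fun=> Int (Delta_forest M) (fun=> 0)) = 0.
    by rewrite (@eq_Int _ _ _ (fun=> 0)) ?Int0 // => b; rewrite Int0.
  rewrite add0r -Int_add; apply: eq_Int => c.
  rewrite Int_swap -Int_add; apply: eq_Int => m.
  rewrite /h /g2 /= SL_Int -Int_add; apply: eq_Int => b /=.
  rewrite SL_RNode; congr (_ + _).
    by apply: Hg => /=; congr [:: _; _]; rewrite -!catA; apply: fcanon_cat => //; apply: fcanon_catC.
  apply: eq_SL => y; apply: Hg => /=; congr [:: _; _]; rewrite -!catA; apply: fcanon_cat => //; apply: fcanon_catC.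
rewrite L1 L2 L3 R1 R1a R2 R2a.
ring.
Qed.

Lemma Int_Dtilde_forest f g : Int (Dtilde_forest f) g =
  Int (Delta_forest f) g - g [:: [::]; f] - g [:: f; [::]].
Proof. by rewrite /Dtilde_forest Int_cat !Int_cons Int_nil !mulN1r addr0 addrA. Qed.

Lemma Int_Dtilde x g : Int (Dtilde x) g = Int x (fun f => Int (Dtilde_forest f) g).
Proof. by rewrite /Dtilde /scaleT Int_flat. Qed.

Lemma Int_flatten (K : Type) (L : seq (seq (rat * K))) g :
  Int (flatten L) g = \sum_(l <- L) Int l g.
Proof. by rewrite /Int big_flatten. Qed.

Lemma Int_topH x y phi : Int (topH x y) phi =
  Int x (fun m => Int y (fun n => (fweight n)%:R^-1 * SL m n phi)).
Proof.
rewrite /topH Int_flatten big_allpairs_dep /Int; apply: eq_bigr => e _.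
rewrite mulr_sumr; apply: eq_bigr => d _.
by rewrite -/(Int _ _) /scaleH Int_scaleL top_forestE !mulrA.
Qed.

Lemma prim_Int p g : prim p -> invT g -> Int p (fun f => Int (Dtilde_forest f) g) = 0.
Proof.
move=> Hp Hg; rewrite -Int_Dtilde.
by rewrite (@lin_resp _ _ (map fcanon) [::] _ _ Hp g Hg) Int_nil.
Qed.

Lemma prim_Delta p g : prim p -> invT g ->
  Int p (fun n => Int (Delta_forest n) g) = Int p (fun n => g [:: [::]; n] + g [:: n; [::]]).
Proof.
move=> Hp Hg; apply/eqP; rewrite -subr_eq0 -Int_sub -(prim_Int Hp Hg); apply/eqP.
by apply: eq_Int => f; rewrite Int_Dtilde_forest opprD addrA.
Qed.

Lemma DF_weight n (Phi : seq forest -> nat -> rat) :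
  Int (Delta_forest n) (fun a => Phi a (fweight (d0 a) + fweight (d1 a))%N) =
  Int (Delta_forest n) (fun a => Phi a (fweight n)).
Proof.
elim/forest_ind: n Phi => [|ts N IHts IHN] Phi; first by rewrite !Int_DF_nil.
rewrite -cat1s !Int_DF_cat.
transitivity (Int (Delta_forest [:: RNode ts]) (fun a => Int (Delta_forest N) (fun b =>
   Phi [:: d0 a ++ d0 b; d1 a ++ d1 b] (fweight (d0 a) + fweight (d1 a) + fweight N)%N))).
  apply: eq_Int => a /=.
  rewrite -(IHN (fun b k => Phi [:: d0 a ++ d0 b; d1 a ++ d1 b] (fweight (d0 a) + fweight (d1 a) + k)%N)).
  apply: eq_Int => b; rewrite !fweight_cat; congr Phi; ring.
rewrite !Int_DF1 !Int_Delta_RNode /=; congr (_ + _).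
  apply: eq_Int => b; congr Phi; rewrite /fweight /= !addn0; ring.
rewrite -(IHts (fun a k => Int (Delta_forest N) (fun b =>
   Phi [:: d0 a ++ d0 b; RNode (d1 a) :: d1 b] (k.+1 + fweight N)%N))).
apply: eq_Int => a; apply: eq_Int => b /=; congr Phi.
rewrite /fweight /= -/(fweight (d0 a)) -/(fweight (d1 a)) addn0; ring.
Qed.

Lemma SL_sub M N phi psi : SL M N (fun x => phi x - psi x) = SL M N phi - SL M N psi.
Proof. by rewrite /SL sumrB. Qed.

Lemma prim_const p : prim p -> Int p (fun n => (n == [::])%:R) = 0.
Proof.
move=> Hp.
pose G := fun a : seq forest => ((fweight (d0 a) + fweight (d1 a))%N == 0%N)%:R : rat.
have HG : invT G.
  move=> a b /fcanon_nth E; rewrite /G.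
  by rewrite (fweight_canon (E 0%N)) (fweight_canon (E 1%N)).
have := prim_Int Hp HG.
rewrite (@eq_Int _ _ _ (fun n => - (n == [::])%:R)); last first.
  move=> f; rewrite Int_Dtilde_forest.
  case: (eqVneq f [::]) => [->|nf].
    by rewrite Int_DF_nil /G /= mulr1n; ring.
  rewrite /G (DF_weight f (fun _ k => (k == 0%N)%:R)) /= addn0.
  rewrite fweight_eq0 (negbTE nf) Int0 /=; ring.
move=> E; have : - Int p (fun n => (n == [::])%:R) = 0.
  by rewrite -E -mulN1r -Int_scal; apply: eq_Int => f; rewrite mulN1r.
by move/eqP; rewrite oppr_eq0 => /eqP.
Qed.

Lemma K_forest m p g : prim p -> invT g ->
  Int p (fun n => (fweight n)%:R^-1 * SL m n (fun f => Int (Dtilde_forest f) g)) =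
  Int p (fun n => g [:: m; n]) +
  Int (Dtilde_forest m) (fun a => Int p (fun n =>
     (fweight n)%:R^-1 * SL (d1 a) n (fun y => g [:: d0 a; y]))).
Proof.
move=> Hp Hg.
have E0 : Int p (fun n => (fweight n)%:R^-1 * SL m n (fun f => Int (Dtilde_forest f) g)) =
   Int p (fun n => (fweight n)%:R^-1 *
     Int (Delta_forest n) (fun a => SL m (d0 a) (fun x => g [:: x; d1 a]))) +
   Int p (fun n => (fweight n)%:R^-1 *
     Int (Delta_forest n) (fun a => Int (Delta_forest m) (fun m' =>
        SL (d1 m') (d1 a) (fun y => g [:: d0 a ++ d0 m'; y])))) -
   Int p (fun n => (fweight n)%:R^-1 * SL m n (fun f => g [:: [::]; f])) -
   Int p (fun n => (fweight n)%:R^-1 * SL m n (fun f => g [:: f; [::]])).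
  rewrite -Int_add -Int_sub -Int_sub; apply: eq_Int => n.
  rewrite (eq_SL _ _ (fun f => Int_Dtilde_forest f g)) !SL_sub DL //; ring.
have E2 : Int p (fun n => (fweight n)%:R^-1 *
     Int (Delta_forest n) (fun a => SL m (d0 a) (fun x => g [:: x; d1 a]))) =
   Int p (fun n => (fweight n)%:R^-1 * SL m n (fun f => g [:: f; [::]])).
  transitivity (Int p (fun n => Int (Delta_forest n) (fun a =>
     ((fweight (d0 a) + fweight (d1 a))%N)%:R^-1 * SL m (d0 a) (fun x => g [:: x; d1 a])))).
    apply: eq_Int => n; rewrite -Int_scal.
    by rewrite (DF_weight n (fun a k => k%:R^-1 * SL m (d0 a) (fun x => g [:: x; d1 a]))).
  rewrite prim_Delta //.
    by apply: eq_Int => n /=; rewrite SL_nil mulr0 add0r addn0.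
  move=> a b /fcanon_nth E; rewrite (fweight_canon (E 0%N)) (fweight_canon (E 1%N)).
  congr (_ * _); rewrite (SL_inv _ (E 0%N)); last first.
    by move=> x y e; apply: Hg => /=; rewrite e.
  by apply: eq_SL => x; apply: Hg => /=; rewrite (E 1%N).
have E3 : Int p (fun n => (fweight n)%:R^-1 *
     Int (Delta_forest n) (fun a => Int (Delta_forest m) (fun m' =>
        SL (d1 m') (d1 a) (fun y => g [:: d0 a ++ d0 m'; y])))) =
   Int (Delta_forest m) (fun m' => Int p (fun n =>
     (fweight n)%:R^-1 * SL (d1 m') n (fun y => g [:: d0 m'; y]))).
  transitivity (Int p (fun n => Int (Delta_forest n) (fun a =>
     ((fweight (d0 a) + fweight (d1 a))%N)%:R^-1 * Int (Delta_forest m) (fun m' =>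
        SL (d1 m') (d1 a) (fun y => g [:: d0 a ++ d0 m'; y]))))).
    apply: eq_Int => n; rewrite -Int_scal.
    by rewrite (DF_weight n (fun a k => k%:R^-1 * Int (Delta_forest m) (fun m' =>
        SL (d1 m') (d1 a) (fun y => g [:: d0 a ++ d0 m'; y])))).
  rewrite prim_Delta //.
    rewrite Int_swap; apply: eq_Int => n /=.
    have Z : Int (Delta_forest m) (fun m' => SL (d1 m') [::] (fun y => g [:: n ++ d0 m'; y])) = 0.
      by rewrite (@eq_Int _ _ _ (fun=> 0)) ?Int0 // => m'; rewrite SL_nil.
    by rewrite Z mulr0 addr0 Int_scal.
  move=> a b /fcanon_nth E; rewrite (fweight_canon (E 0%N)) (fweight_canon (E 1%N)).
  congr (_ * _); apply: eq_Int => m'; rewrite (SL_inv _ (E 1%N)); last first.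
    by move=> x y e; apply: Hg => /=; rewrite e.
  apply: eq_SL => y; apply: Hg => /=; by rewrite (fcanon_cat (E 0%N) (erefl _)).
have E5 : Int p (fun n => (fweight n)%:R^-1 * SL [::] n (fun y => g [:: m; y])) =
   Int p (fun n => g [:: m; n]).
  transitivity (Int p (fun n => g [:: m; n] - (n == [::])%:R * g [:: m; [::]])).
    apply: eq_Int => n; rewrite SL_nilM; case: (eqVneq n [::]) => [->|nn].
      by rewrite /= mul0r mulr0 mul1r subrr.
    rewrite mulrA mulVf ?mul1r ?mul0r ?subr0 //.
    by rewrite pnatr_eq0 fweight_eq0.
  by rewrite Int_sub Int_scalr prim_const // mul0r subr0.
have E4 : Int (Delta_forest m) (fun m' => Int p (fun n =>
     (fweight n)%:R^-1 * SL (d1 m') n (fun y => g [:: d0 m'; y]))) =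
   Int (Dtilde_forest m) (fun m' => Int p (fun n =>
     (fweight n)%:R^-1 * SL (d1 m') n (fun y => g [:: d0 m'; y]))) +
   Int p (fun n => (fweight n)%:R^-1 * SL m n (fun f => g [:: [::]; f])) +
   Int p (fun n => g [:: m; n]).
  by rewrite Int_Dtilde_forest /= -E5; ring.
rewrite E0 E2 E3 E4; ring.
Qed.

Definition sing (f : forest) : H := [:: (1, f)].

Lemma Int_sing f phi : Int (sing f) phi = phi f.
Proof. by rewrite /sing Int_cons Int_nil mul1r addr0. Qed.

Lemma Int_topH_sing v p phi : Int (topH (sing v) p) phi =
  Int p (fun n => (fweight n)%:R^-1 * SL v n phi).
Proof. by rewrite Int_topH Int_sing. Qed.

Lemma K_main x p g : prim p -> invT g ->
  Int (Dtilde (topH x p)) g =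
  Int x (fun m => Int p (fun n => g [:: m; n])) +
  Int (Dtilde x) (fun a => Int (topH (sing (d1 a)) p) (fun y => g [:: d0 a; y])).
Proof.
move=> Hp Hg.
rewrite Int_Dtilde Int_topH Int_Dtilde -Int_add; apply: eq_Int => m.
rewrite K_forest //; congr (_ + _); apply: eq_Int => a; by rewrite Int_topH_sing.
Qed.

Lemma top_seq_rcons s p : s != [::] -> top_seq (rcons s p) = topH (top_seq s) p.
Proof. by case: s => // q s _ /=; rewrite foldl_rcons. Qed.

Lemma top_seq1 p : top_seq [:: p] = p.
Proof. by []. Qed.

Definition allprim (s : seq H) := forall p, p \in s -> prim p.

Lemma invT_topH p (g : seq forest -> rat) : invT g ->
  invT (fun a => Int (topH (sing (d1 a)) p) (fun y => g [:: d0 a; y])).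
Proof.
move=> Hg a b /fcanon_nth E; rewrite !Int_topH_sing; apply: eq_Int => n; congr (_ * _).
rewrite (@SL_invM (d1 a) (d1 b) n _ (E 1%N)); last by move=> y y' e; apply: Hg => /=; rewrite e.
by apply: eq_SL => y; apply: Hg => /=; rewrite (E 0%N).
Qed.

Lemma Dt_top s g : s != [::] -> allprim s -> invT g ->
  Int (Dtilde (top_seq s)) g =
  \sum_(1 <= j < size s) Int (top_seq (take j s)) (fun a =>
      Int (top_seq (drop j s)) (fun b => g [:: a; b])).
Proof.
elim/last_ind: s g => [|s p IH] g // _ Hs Hg.
have Hp : prim p by apply: Hs; rewrite mem_rcons inE eqxx.
case: (eqVneq s [::]) => [->|ns].
  by rewrite /= big_geq // Int_Dtilde (prim_Int Hp Hg).
have Hs' : allprim s by move=> q qs; apply: Hs; rewrite mem_rcons inE qs orbT.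
rewrite top_seq_rcons // K_main // (IH _ ns Hs' (invT_topH p Hg)).
rewrite size_rcons big_nat_recr /=; last by rewrite lt0n size_eq0.
rewrite addrC; congr (_ + _).
  by rewrite -cats1 takel_cat // take_size drop_size_cat.
apply: eq_big_nat => j /andP[j1 js].
rewrite -cats1 takel_cat ?(ltnW js) // drop_cat js cats1.
rewrite top_seq_rcons; last by rewrite -size_eq0 size_drop subn_eq0 -ltnNge.
apply: eq_Int => a /=; rewrite Int_topH; apply: eq_Int => b; by rewrite Int_topH_sing.
Qed.

Lemma Int_DP k x g : Int (Dtilde_pow k x) g = Int x (fun f => Int (Dtilde_pow_forest k f) g).
Proof. by rewrite /Dtilde_pow /scaleT Int_flat. Qed.

Lemma Int_DPF0 f g : Int (Dtilde_pow_forest 0 f) g = g [:: f] - eps_forest f * g [:: [::]].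
Proof. by rewrite /= !Int_cons Int_nil mul1r addr0 mulNr. Qed.

Lemma Int_DPFS k f g : Int (Dtilde_pow_forest k.+1 f) g =
  Int (Dtilde_forest f) (fun e => Int (Dtilde_pow_forest k (d0 e)) (fun d => g (rcons d (d1 e)))).
Proof.
rewrite /= Int_flatten big_map /Int; apply: eq_bigr => e _.
by rewrite -/(Int _ _) /scaleT Int_scaleL (Int_mapk (fun d => rcons d (nth [::] e.2 1))).
Qed.

Lemma eps_forestE f : eps_forest f = (f == [::])%:R.
Proof. by case: f. Qed.

Lemma Dtilde_forest_inv f f' g : fcanon f = fcanon f' -> invT g ->
  Int (Dtilde_forest f) g = Int (Dtilde_forest f') g.
Proof.
move=> e Hg; rewrite !Int_Dtilde_forest (DF_inv e Hg).
by rewrite (Hg [:: [::]; f] [:: [::]; f']) ?(Hg [:: f; [::]] [:: f'; [::]]) //= e.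
Qed.

Lemma invT_rcons (g : seq forest -> rat) : invT g ->
  forall d d' x x', map fcanon d = map fcanon d' -> fcanon x = fcanon x' ->
  g (rcons d x) = g (rcons d' x').
Proof. by move=> Hg d d' x x' e1 e2; apply: Hg; rewrite !map_rcons e1 e2. Qed.

Lemma DPF_inv k f f' g : fcanon f = fcanon f' -> invT g ->
  Int (Dtilde_pow_forest k f) g = Int (Dtilde_pow_forest k f') g.
Proof.
elim: k f f' g => [|k IH] f f' g e Hg.
  rewrite !Int_DPF0 !eps_forestE -(fcanon_nil f) -(fcanon_nil f') e.
  by rewrite (Hg [:: f] [:: f']) //= e.
rewrite !Int_DPFS; apply: Dtilde_forest_inv => // a b /fcanon_nth E.
rewrite (IH _ _ _ (E 0%N)); last by move=> d d' ed; apply: (invT_rcons Hg).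
apply: eq_Int => d; apply: (invT_rcons Hg) => //; exact: E.
Qed.

Lemma DPF_nil k g : Int (Dtilde_pow_forest k [::]) g = 0.
Proof.
elim: k g => [|k IH] g; first by rewrite Int_DPF0 /= mul1r subrr.
rewrite Int_DPFS /Dtilde_forest Int_cat Int_DF_nil !Int_cons Int_nil /=.
by rewrite !IH !mulr0 !addr0.
Qed.

Lemma top_eps s : s != [::] -> allprim s -> Int (top_seq s) (fun f => eps_forest f) = 0.
Proof.
case/lastP: s => [|s q] // _ Hs.
case: (eqVneq s [::]) => [->|ns].
  rewrite /= (@eq_Int _ _ _ (fun f => (f == [::])%:R)) ?prim_const //.
    by apply: Hs; rewrite mem_rcons inE eqxx.
  by move=> f; rewrite eps_forestE.
rewrite top_seq_rcons // Int_topH (@eq_Int _ _ _ (fun=> 0)) ?Int0 // => m.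
rewrite (@eq_Int _ _ _ (fun=> 0)) ?Int0 // => n.
rewrite /SL big1 ?mulr0 // => v _; rewrite eps_forestE.
by rewrite (negbTE (graftF_nonnil _ _ _)).
Qed.

Fixpoint SS (k : nat) (s : seq H) (g : seq forest -> rat) : rat :=
  match k with
  | 0%N => Int (top_seq s) (fun f => g [:: f])
  | k'.+1 => \sum_(1 <= j < size s)
       SS k' (take j s) (fun a => Int (top_seq (drop j s)) (fun b => g (rcons a b)))
  end.

Lemma DP_top k s g : s != [::] -> allprim s -> invT g ->
  Int (Dtilde_pow k (top_seq s)) g = SS k s g.
Proof.
elim: k s g => [|k IH] s g ns Hs Hg.
  rewrite Int_DP /=; under eq_Int => f do rewrite Int_DPF0.
  by rewrite Int_sub Int_scalr top_eps // mul0r subr0.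
rewrite Int_DP; under eq_Int => f do rewrite Int_DPFS.
rewrite -Int_Dtilde Dt_top //; last first.
  move=> a b /fcanon_nth E; rewrite (DPF_inv _ (E 0%N)); last first.
    by move=> d d' ed; apply: (invT_rcons Hg).
  apply: eq_Int => d; apply: (invT_rcons Hg) => //; exact: E.
rewrite /=; apply: eq_big_nat => j /andP[j1 js].
have nt : take j s != [::] by rewrite -size_eq0 size_take js -lt0n.
have Ht : allprim (take j s) by move=> q /mem_take; apply: Hs.
rewrite -IH //; last first.
  move=> d d' ed; apply: eq_Int => b; exact: (invT_rcons Hg).
rewrite Int_DP; apply: eq_Int => a; exact: Int_swap.
Qed.

Lemma Int_pt_nil g : Int (pure_tensor [::]) g = g [::].
Proof. by rewrite /= Int_cons Int_nil mul1r addr0. Qed.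

Lemma Int_pt_cons p ps g : Int (pure_tensor (p :: ps)) g =
  Int p (fun f => Int (pure_tensor ps) (fun a => g (f :: a))).
Proof. exact: (Int_pair (fun a b => a :: b)). Qed.

Lemma pt_rcons s q g : Int (pure_tensor (rcons s q)) g =
  Int (pure_tensor s) (fun a => Int q (fun b => g (rcons a b))).
Proof.
elim: s g => [|p s IH] g.
  rewrite [rcons _ _]/= Int_pt_cons Int_pt_nil; apply: eq_Int => f; by rewrite Int_pt_nil.
by rewrite rcons_cons !Int_pt_cons; apply: eq_Int => f; rewrite IH.
Qed.

Lemma SS_zero k s g : (size s <= k)%N -> SS k s g = 0.
Proof.
elim: k s g => [|k IH] s g /=.
  by rewrite leqn0 size_eq0 => /eqP ->; rewrite Int_nil.
move=> le; rewrite big_seq_cond big1 // => j; rewrite mem_index_iota => /andP[/andP[_ js] _].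
apply: IH; rewrite size_take js -ltnS; exact: leq_trans js le.
Qed.

Lemma SS_full s g : s != [::] -> SS (size s).-1 s g = Int (pure_tensor s) g.
Proof.
elim/last_ind: s g => [|s q IH] g // _.
case: (eqVneq s [::]) => [->|ns].
  by rewrite pt_rcons Int_pt_nil.
rewrite size_rcons /=.
have [k Ek] : exists k, size s = k.+1 by exists (size s).-1; rewrite prednK // lt0n size_eq0.
rewrite Ek /= size_rcons Ek big_nat_recr //=.
rewrite big_seq_cond big1 ?add0r; last first.
  move=> j; rewrite mem_index_iota => /andP[/andP[_ js] _]; apply: SS_zero.
  by rewrite size_take size_rcons Ek ltnS (ltnW js) -ltnS.
have -> : take k.+1 (rcons s q) = s by rewrite -cats1 takel_cat -Ek ?take_size.
have -> : drop k.+1 (rcons s q) = [:: q] by rewrite -cats1 -Ek drop_size_cat.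
by rewrite pt_rcons -IH // Ek.
Qed.

Lemma Int_F X phi : Int (F X) phi = Int X (fun ps => Int (top_seq ps) phi).
Proof. by rewrite /F /scaleH Int_flat. Qed.

Lemma Int_tens X g : Int (tens X) g = Int X (fun ps => Int (pure_tensor ps) g).
Proof. by rewrite /tens /scaleT Int_flat. Qed.

Lemma part1 i X : (1 <= i)%N -> in_prim_tens i X -> forall g, invT g ->
  Int (Dtilde_pow i.-1 (F X)) g = Int (tens X) g.
Proof.
move=> i1 HX g Hg; rewrite Int_DP Int_F Int_tens; apply: Int_eq => [[c ps]] Hin /=.
have [sz Hp] := HX c ps Hin.
have nps : ps != [::] by rewrite -size_eq0 sz -lt0n.
by rewrite -Int_DP DP_top // -sz SS_full.
Qed.

Lemma part2 i k X : (i.-1 < k)%N -> in_prim_tens i X -> forall g, invT g ->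
  Int (Dtilde_pow k (F X)) g = 0.
Proof.
move=> ik HX g Hg; rewrite Int_DP Int_F (@Int_eq _ _ _ (fun=> 0)) ?Int0 // => [[c ps]] Hin /=.
have [sz Hp] := HX c ps Hin.
case: (eqVneq ps [::]) => [->|nps]; first by rewrite Int_nil.
rewrite -Int_DP DP_top // SS_zero // sz.
by move: ik; rewrite -sz; case: (size ps) nps => [|n] //; rewrite size_eq0 => /negP.
Qed.

Lemma lin1 x r phi : Int (foldl topH x r) phi = Int x (fun m => Int (foldl topH (sing m) r) phi).
Proof.
elim: r x => [|q r IH] x /=; first by apply: eq_Int => m; rewrite Int_sing.
rewrite IH Int_topH; apply: eq_Int => m.
by rewrite IH Int_topH_sing.
Qed.

Lemma multi x rest phi : Int (foldl topH x rest) phi =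
  Int x (fun m => Int (pure_tensor rest) (fun a => Int (foldl topH (sing m) (map sing a)) phi)).
Proof.
elim: rest x => [|q r IH] x /=.
  by apply: eq_Int => m; rewrite Int_pt_nil /= Int_sing.
rewrite IH Int_topH; apply: eq_Int => m; rewrite Int_pt_cons; apply: eq_Int => n.
rewrite SL_Int -Int_scal; apply: eq_Int => a /=.
by rewrite lin1 Int_topH_sing Int_sing.
Qed.

Lemma F_tens X phi : Int (F X) phi = Int (tens X) (fun a => Int (top_seq (map sing a)) phi).
Proof.
rewrite Int_F Int_tens; apply: eq_Int => [[|q rest]].
  by rewrite Int_pt_nil /= Int_nil.
by rewrite /= multi Int_pt_cons.
Qed.

Definition Heq (x y : H) := forall psi, invH psi -> Int x psi = Int y psi.

Lemma foldl_inv r r' x x' : Heq x x' -> map fcanon r = map fcanon r' ->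
  Heq (foldl topH x (map sing r)) (foldl topH x' (map sing r')).
Proof.
elim: r r' x x' => [|f r IH] [|f' r'] x x' Hx //= e.
case: e => e1 e2; apply: IH => // psi Hpsi.
rewrite !Int_topH; under eq_Int => m do rewrite Int_sing.
under [RHS]eq_Int => m do rewrite Int_sing.
rewrite (fweight_canon e1) Hx; last first.
  move=> m m' em; congr (_ * _); exact: SL_invM.
apply: eq_Int => m; congr (_ * _); exact: SL_inv.
Qed.

Lemma topseq_inv a b phi : map fcanon a = map fcanon b -> invH phi ->
  Int (top_seq (map sing a)) phi = Int (top_seq (map sing b)) phi.
Proof.
case: a => [|a0 a]; case: b => [|b0 b] //= [e0 e] Hphi.
apply: (@foldl_inv a b (sing a0) (sing b0) _ e phi Hphi) => psi Hpsi.
rewrite !Int_sing; exact: Hpsi.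
Qed.


Lemma eqT_Int x y : (forall g, invT g -> Int x g = Int y g) -> eqT x y.
Proof. move=> H b; exact: (@lin_eq _ _ (map fcanon) x y H b). Qed.

Lemma eqH_Int x y : (forall g, invH g -> Int x g = Int y g) -> eqH x y.
Proof. move=> H b; exact: (@lin_eq _ _ fcanon x y H b). Qed.

Lemma Int_eqH x y : eqH x y -> forall g, invH g -> Int x g = Int y g.
Proof. move=> H g Hg; exact: (@lin_resp _ _ fcanon [::] x y H g Hg). Qed.

Lemma invH_DPF k g : invT g -> invH (fun f => Int (Dtilde_pow_forest k f) g).
Proof. by move=> Hg f f' e; apply: DPF_inv. Qed.

Lemma invT_topseq phi : invH phi -> invT (fun a => Int (top_seq (map sing a)) phi).
Proof. by move=> Hphi a b e; apply: topseq_inv. Qed.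

Lemma Int_flatF (l : seq nat) (Xs : nat -> seq (rat * seq H)) phi :
  Int (flatten [seq F (Xs j) | j <- l]) phi = \sum_(j <- l) Int (F (Xs j)) phi.
Proof. by rewrite Int_flatten big_map. Qed.

Theorem lemma4p4 (i : nat) : (1 <= i)%N ->
  (* tilde Delta^(i-1) o F_i = Id on Prim^{(x) i} *)
  (forall X, in_prim_tens i X -> eqT (Dtilde_pow i.-1 (F X)) (tens X)) /\
  (* tilde Delta^k o F_i = 0 for k > i-1 *)
  (forall (k : nat) X, (i.-1 < k)%N -> in_prim_tens i X ->
     eqT (Dtilde_pow k (F X)) [::]) /\
  (* F_i is injective *)
  (forall X Y, in_prim_tens i X -> in_prim_tens i Y ->
     eqH (F X) (F Y) -> eqT (tens X) (tens Y)) /\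
  (* Q1 + sum_(j >= 1) Im(F_j) is direct *)
  (forall (c : rat) (n : nat) (Xs : nat -> seq (rat * seq H)),
     (forall j, (1 <= j <= n)%N -> in_prim_tens j (Xs j)) ->
     eqH (scaleH c oneH ++ flatten [seq F (Xs j) | j <- iota 1 n]) [::] ->
     c = 0 /\ (forall j, (1 <= j <= n)%N -> eqH (F (Xs j)) [::])).
Proof.
move=> i1; split; [|split; [|split]].
- move=> X HX; apply: eqT_Int => g Hg; exact: part1.
- move=> k X ik HX; apply: eqT_Int => g Hg; by rewrite (part2 ik HX Hg) Int_nil.
- move=> X Y HX HY HXY; apply: eqT_Int => g Hg.
  rewrite -(part1 i1 HX Hg) -(part1 i1 HY Hg) !Int_DP.
  exact: (Int_eqH HXY (invH_DPF _ Hg)).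
move=> c n Xs; elim: n => [|n IH] HXs HZ.
  have := Int_eqH HZ (g := fun f => (f == [::])%:R) _.
  rewrite /= Int_cons !Int_nil /= mulr1 mulr1 addr0 => H0.
  have -> : c = 0 by apply: H0 => f f' e; rewrite -(fcanon_nil f) e fcanon_nil.
  by split => // j /andP[j1]; rewrite leqn0 => /eqP e; rewrite e in j1.
have HXs' : forall j, (1 <= j <= n)%N -> in_prim_tens j (Xs j).
  by move=> j /andP[j1 jn]; apply: HXs; rewrite j1 (leq_trans jn).
have Hn1 : in_prim_tens n.+1 (Xs n.+1) by apply: HXs; rewrite leqnn.
have Ez : forall phi, invH phi ->
   Int (scaleH c oneH ++ flatten [seq F (Xs j) | j <- iota 1 n]) phi + Int (F (Xs n.+1)) phi = 0.
  move=> phi Hphi; rewrite -(Int_nil phi) -(Int_eqH HZ Hphi).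
  have -> : iota 1 n.+1 = iota 1 n ++ [:: n.+1].
    by have := iotaD 1 n 1; rewrite addn1 add1n => ->.
  by rewrite map_cat flatten_cat /= cats0 !Int_cons Int_cat addrA.
have A : forall g, invT g -> Int (tens (Xs n.+1)) g = 0.
  move=> g Hg; have := Ez _ (invH_DPF n Hg).
  rewrite Int_cat /scaleH /oneH Int_cons Int_nil addr0 /= DPF_nil mulr0 add0r.
  rewrite Int_flatF big_seq_cond big1 ?add0r; last first.
    move=> j; rewrite mem_iota => /andP[/andP[j1 jn] _].
    rewrite -Int_DP (part2 _ (HXs' j _) Hg) //; last by rewrite j1 -ltnS -(addn1 n) addnC.
    by rewrite prednK // -ltnS -(addn1 n) addnC.
  by rewrite -Int_DP (part1 _ Hn1 Hg).
have B : eqH (F (Xs n.+1)) [::].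
  apply: eqH_Int => phi Hphi; rewrite F_tens Int_nil; exact: A (invT_topseq Hphi).
have C : eqH (scaleH c oneH ++ flatten [seq F (Xs j) | j <- iota 1 n]) [::].
  apply: eqH_Int => phi Hphi; have := Ez _ Hphi.
  by rewrite (Int_eqH B Hphi) Int_nil addr0 => ->.
have [c0 Hj] := IH HXs' C; split => // j /andP[j1]; rewrite leq_eqVlt => /orP[/eqP->|jn] //.
by apply: Hj; rewrite j1 -ltnS.
Qed.
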